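(* Assume the setting and Assumptions L1, L2 of the context, and define $\delta_1=\min\{\delta_0,(1-e^{-\bar\kappa\sigma})/(2K_1)\}$. Let $U=U^*+F_0$ with $\|F_0\|_{\rm s}<\|F_0\|_{\rm u}\le\delta_1$, and set $F_n=\mathcal R_{n\sigma}(U)-U^*$. Then for every $n\ge0$ such that $\|F_k\|_{\rm u}\le\delta_1$ for all $0\le k\le n$, we have $$\|F_n\|_{\rm s}<\|F_n\|_{\rm u}\quad\text{and}\quad e^{\bar\kappa\sigma/2}\|F_n\|_{\rm u}<\|F_{n+1}\|_{\rm u}<2K_2\|F_n\|_{\rm u}.$$
   Context: $\Gamma$ is a real Banach space, $\sigma>0$, $\mathcal R_\sigma:\Gamma\to\Gamma$ a map with fixed point $U^*$, $\mathcal R_{n\sigma}=(\mathcal R_\sigma)^n$, $\mathcal T_{\sigma,U}$ the Fréchet derivative of $\mathcal R_\sigma$ at $U$. Assumption L1: $\Gamma=E^{\rm u}\oplus E^{\rm s}$, invariant under $\mathcal T_{\sigma,U^*}$, $\dim E^{\rm u}=N$, and for some $\bar\kappa>0$: $\|\mathcal T_{\sigma,U^*}F\|\ge e^{\bar\kappa\sigma}\|F\|$ for $F\in E^{\rm u}$, $\le e^{-\bar\kappa\sigma}\|F\|$ for $F\in E^{\rm s}$. For $F=F^{\rm u}+F^{\rm s}$ ($F^{\rm u}\in E^{\rm u}$, $F^{\rm s}\in E^{\rm s}$), $\|F\|_{\rm s}=\|F^{\rm s}\|$, $\|F\|_{\rm u}=\|F^{\rm u}\|$, and $\|\cdot\|$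 denotes the box norm $\|F\|=\max\{\|F\|_{\rm s},\|F\|_{\rm u}\}$. Assumption L2: there are $\delta_0,K_1,K_2>0$ with $\delta_0K_1\le K_2$ such that for $\|U-U^*\|,\|F\|\le\delta_0$: $\|\mathcal R_\sigma(U+F)-\mathcal R_\sigma(U)-\mathcal T_{\sigma,U}F\|\le K_1\|F\|^2$ and $\|\mathcal T_{\sigma,U}F\|\le K_2\|F\|$. *)

(* Defs.v *)
From HB Require Import structures.
From mathcomp Require Import all_boot all_order all_algebra.
From mathcomp Require Import all_classical all_reals all_analysis.
Set Implicit Arguments. Unset Strict Implicit. Unset Printing Implicit Defensive.
Import Order.TTheory GRing.Theory Num.Theory.
Import numFieldNormedType.Exports.
Local Open Scope classical_set_scope.
Local Open Scope ring_scope.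

Definition prange (R : realType) (V : normedModType R) (P : V -> V) : set V :=
  range P.

Definition has_dim (R : realType) (V : normedModType R) (E : set V) (N : nat) : Prop :=
  exists e : 'I_N -> V,
    (forall c : 'I_N -> R, \sum_(i < N) c i *: e i = 0 -> forall i, c i = 0) /\
    E = [set \sum_(i < N) c i *: e i | c in [set: 'I_N -> R]].

(* Main.v *)
Require Import Defs.
From HB Require Import structures.
From mathcomp Require Import all_boot all_order all_algebra.
From mathcomp Require Import all_classical all_reals all_analysis.
From mathcomp Require Import ring lra.
Import Order.TTheory GRing.Theory Num.Theory.
Import numFieldNormedType.Exports.
Local Open Scope classical_set_scope.
Local Open Scope ring_scope.


Lemma key_a (R : realFieldType) (a c : R): 1 < a -> c * (a*a) = 1 -> a < a*a - (1 - c)/2.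
Proof.
move=> a1 ca.
have c0 : 0 < c by nra.
have P : 0 < (a-1)*(2*a*a*a - a - 1).
  apply: mulr_gt0; first lra.
  have -> : 2*a*a*a - a - 1 = (a-1)*(2*a*a+2*a+1) by ring.
  apply: mulr_gt0; nra.
have cP : 0 < c * ((a-1)*(2*a*a*a - a - 1)) by exact: mulr_gt0.
have e1 : c * ((a-1)*(2*a*a*a - a - 1)) = 2 * (a*a) * (c*(a*a)) - 2 * a * (c * (a*a)) - c*(a*a) + c.
  ring.
rewrite ca in e1. lra.
Qed.

Lemma key_step (R : realFieldType) (a c K1 K2 u s A u' s' : R) :
  1 < a -> c * (a*a) = 1 -> 0 < K1 -> 0 < u -> s < u -> 0 <= s ->
  K1 * u <= (1 - c)/2 -> a*a*u <= A -> A <= K2 * u ->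
  A - K1 * u^+2 <= u' -> u' <= A + K1 * u^+2 -> s' <= c * s + K1 * u^+2 ->
  [/\ s' < u', a * u < u' & u' < 2 * K2 * u].
Proof.
move=> a1 ca K10 u0 su s0 K1u Al Au ul uu sl.
have c0 : 0 < c by nra.
have c1 : c < 1 by nra.
have e1 : 1 < a * a by nra.
have K2g : a * a <= K2 by nra.
have hK : K1 * u^+2 <= (1-c)/2 * u by nra.
have ka := @key_a _ a c a1 ca.
split.
- have : c * s < c * u by rewrite ltr_pM2l.
  nra.
- nra.
- nra.
Qed.

Theorem lemma1 (R : realType) (V : completeNormedModType R)
  (sigma : R) (Rs : V -> V) (Ustar : V) (T : V -> V -> V)
  (N : nat) (Pu Ps : {linear V -> V}) (kappa delta0 K1 K2 : R)
  (U F0 : V) :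
  0 < sigma ->
  Rs Ustar = Ustar ->
  (* T U is the Frechet derivative of Rs at U (on the region where L2 is used) *)
  (forall W : V, `|W - Ustar| <= delta0 ->
     differentiable Rs W /\ ('d Rs W : V -> V) = T W) ->
  (* L1: Gamma = E^u (+) E^s with projections Pu, Ps *)
  (forall F, Pu F + Ps F = F) ->
  (forall F, Pu (Pu F) = Pu F) ->
  (forall F, Ps (Pu F) = 0) ->
  (forall F, Pu (Ps F) = 0) ->
  has_dim (prange Pu) N ->
  (forall F, prange Pu F -> prange Pu (T Ustar F)) ->
  (forall F, prange Ps F -> prange Ps (T Ustar F)) ->
  0 < kappa ->
  (forall F, prange Pu F -> expR (kappa * sigma) * `|F| <= `|T Ustar F|) ->
  (forall F, prange Ps F -> `|T Ustar F| <= expR (- (kappa * sigma)) * `|F|) ->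
  (* the norm of Gamma is the box norm *)
  (forall F, `|F| = Num.max `|Ps F| `|Pu F|) ->
  (* L2 *)
  0 < delta0 -> 0 < K1 -> 0 < K2 -> delta0 * K1 <= K2 ->
  (forall W F, `|W - Ustar| <= delta0 -> `|F| <= delta0 ->
     `|Rs (W + F) - Rs W - T W F| <= K1 * `|F| ^+ 2 /\
     `|T W F| <= K2 * `|F|) ->
  (* the lemma *)
  let delta1 := Num.min delta0 ((1 - expR (- (kappa * sigma))) / (2 * K1)) in
  U = Ustar + F0 ->
  `|Ps F0| < `|Pu F0| -> `|Pu F0| <= delta1 ->
  let Fn := fun n : nat => iter n Rs U - Ustar in
  forall n : nat,
    (forall k : nat, (k <= n)%N -> `|Pu (Fn k)| <= delta1) ->
    `|Ps (Fn n)| < `|Pu (Fn n)| /\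
    expR (kappa * sigma / 2) * `|Pu (Fn n)| < `|Pu (Fn n.+1)| /\
    `|Pu (Fn n.+1)| < 2 * K2 * `|Pu (Fn n)|.
Proof.
Proof.
move=> s0 hfix hd hsum hPuu hPsu hPus _ invu invs k0 expu contrs box d00 K10 K20 dK L2.
move=> delta1 hU hsu hud Fn n hk.
have hUs : `|Ustar - Ustar| <= delta0 by rewrite subrr normr0 ltW.
have [_ hdT] := hd Ustar hUs.
set T0 := T Ustar in hdT L2 invu invs expu contrs *.
have T0D : forall x y, T0 (x + y) = T0 x + T0 y.
  by move=> x y; rewrite -hdT linearD.
have hPss : forall y, Ps (Ps y) = Ps y.
  by move=> y; have := hsum (Ps y); rewrite hPus add0r.
have PuT : forall F, Pu (T0 F) = T0 (Pu F).
  move=> F; rewrite -{1}(hsum F) T0D.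
  have [y _ ey] := invu (Pu F) (ex_intro2 _ _ F I erefl).
  have [z _ ez] := invs (Ps F) (ex_intro2 _ _ F I erefl).
  by rewrite -ey -ez linearD hPuu hPus addr0.
have PsT : forall F, Ps (T0 F) = T0 (Ps F).
  move=> F; rewrite -{1}(hsum F) T0D.
  have [y _ ey] := invu (Pu F) (ex_intro2 _ _ F I erefl).
  have [z _ ez] := invs (Ps F) (ex_intro2 _ _ F I erefl).
  by rewrite -ey -ez linearD hPsu hPss add0r.
have nPu : forall F, `|Pu F| <= `|F|.
  by move=> F; rewrite [X in _ <= X]box le_max lexx orbT.
have nPs : forall F, `|Ps F| <= `|F|.
  by move=> F; rewrite [X in _ <= X]box le_max lexx.
pose a := expR (kappa * sigma / 2).
pose c := expR (- (kappa * sigma)).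
have ks0 : 0 < kappa * sigma by exact: mulr_gt0.
have a1 : 1 < a by rewrite /a expR_gt1 divr_gt0.
have eaa : expR (kappa * sigma) = a * a.
  by rewrite /a -expRD -splitr.
have ca : c * (a * a) = 1 by rewrite -eaa /c mulrC expRxMexpNx_1.
have d1d0 : delta1 <= delta0 by rewrite /delta1 ge_min lexx.
have d1d : delta1 <= (1 - c) / (2 * K1) by rewrite /delta1 ge_min lexx orbT.
have step : forall X, `|Ps X| < `|Pu X| -> `|Pu X| <= delta1 ->
   `|Ps (Rs (Ustar + X) - Ustar)| < `|Pu (Rs (Ustar + X) - Ustar)| /\
   a * `|Pu X| < `|Pu (Rs (Ustar + X) - Ustar)| /\
   `|Pu (Rs (Ustar + X) - Ustar)| < 2 * K2 * `|Pu X|.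
  move=> X hs hu.
  have nX : `|X| = `|Pu X| by rewrite box max_r // ltW.
  have hX : `|X| <= delta0 by rewrite nX (le_trans hu d1d0).
  have [hE _] := L2 Ustar X hUs hX.
  have [_ hTu] := L2 Ustar (Pu X) hUs (le_trans hu d1d0).
  set E := Rs (Ustar + X) - Rs Ustar - T0 X in hE.
  have eY : Rs (Ustar + X) - Ustar = T0 X + E.
    by rewrite /E hfix [RHS]addrC subrK.
  rewrite eY.
  have -> : Pu (T0 X + E) = T0 (Pu X) + Pu E by rewrite linearD PuT.
  have -> : Ps (T0 X + E) = T0 (Ps X) + Ps E by rewrite linearD PsT.
  have hA := expu (Pu X) (ex_intro2 _ _ X I erefl).
  rewrite eaa in hA.
  have hC := contrs (Ps X) (ex_intro2 _ _ X I erefl).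
  have hPuE : `|Pu E| <= K1 * `|Pu X| ^+ 2 by rewrite -nX (le_trans (nPu E)).
  have hPsE : `|Ps E| <= K1 * `|Pu X| ^+ 2 by rewrite -nX (le_trans (nPs E)).
  have l1 := lerB_normD (T0 (Pu X)) (Pu E).
  have l2 := ler_normD (T0 (Pu X)) (Pu E).
  have l3 := ler_normD (T0 (Ps X)) (Ps E).
  have u0 : 0 < `|Pu X| by apply: le_lt_trans hs.
  have K1u : K1 * `|Pu X| <= (1 - c) / 2.
    have h2 : 0 < 2 * K1 by rewrite mulr_gt0.
    have := le_trans hu d1d; rewrite ler_pdivlMr // => h; nra.
  have [r1 r2 r3] := @key_step _ _ _ _ _ _ _ _ _ _ a1 ca K10 u0 hs (normr_ge0 _) K1u hA
     (hTu : `|T0 (Pu X)| <= K2 * `|Pu X|)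
     (le_trans (lerB (lexx _) hPuE) l1 : _ <= _)
     (le_trans l2 (lerD (lexx _) hPuE))
     (le_trans l3 (lerD hC hPsE)).
  by repeat split.
have hFS : forall m, Fn m.+1 = Rs (Ustar + Fn m) - Ustar.
  by move=> m; rewrite /Fn iterS [Ustar + _]addrC subrK.
have claim : forall m, (m <= n)%N -> `|Ps (Fn m)| < `|Pu (Fn m)|.
  elim=> [_|m IH hm].
    have -> : Fn 0%N = F0 by rewrite /Fn /= hU addrC addKr.
    exact: hsu.
  have hm' : (m <= n)%N by apply: leq_trans hm; exact: leqnSn.
  have [h _] := step (Fn m) (IH hm') (hk m hm').
  by rewrite hFS.
have [_ [h1 h2]] := step (Fn n) (claim n (leqnn n)) (hk n (leqnn n)).
by split; [exact: claim | rewrite hFS; split].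
Qed.
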